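(* Let $M$ be a model with borders, let $M^s$ be its submodel of separated points, and let $r:\mathcal U(M^s)\to\mathcal U(M)$ be the map \[ r(V)=\{x\in M \mid \forall y\ge x\ (y\in M^s \Rightarrow y\in V)\} \] (the upper adjoint of the restriction map $q:\mathcal U(M)\to\mathcal U(M^s)$, $q(W)=W\cap M^s$). Then $r$ preserves binary meets and Heyting implication, and for every $(\wedge,\to)$-formula $\varphi$ we have $v(\varphi)=r(v^s(\varphi))$; that is, for every $x\in M$, \[ M,x\models\varphi \iff \forall y\ge x\ \big(y\in M^s \Rightarrow M^s,y\models\varphi\big). \]
   Context: Fix $n\ge1$ and variables $p_1,\dots,p_n$; $2^n=\{0,1\}^n$ with componentwise order. A model is $(M,\le,c)$, $(M,\le)$ a poset, $c:M\to 2^n$ order-preserving, with intuitionistic Kripke semantics ($x\models p_i$ iff $c(x)_i=1$; $x\models\varphi\to\psi$ iff every $y\ge x$ satisfying $\varphi$ satisfies $\psi$; etc.). $\mathcal U(X)$ denotes the Heyting algebra of up-sets of a poset $X$. $v(\varphi)$ is the set of points of $M$ satisfying $\varphi$. A $(\wedge,\to)$-formula uses only $\wedge$ and $\to$. A point $x$ is a $q$-border point if $x\not\models q$ and all $y>x$ satisfy $q$; $x$ is separated if it is a $q$-border point for some variable $q$. $M^s$ is the set of separated points with the restricted order and colouring, regarded as a model in its own right (satisfaction in $M^s$ computed w.r.t. its own order); $v^s(\varphi)$ is the set of points of $M^s$ satisfying $\varphi$ in $M^s$. $M$ has borders if for every variable $p$ and every $x\in M$ with $x\not\models p$ there is a $p$-border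 point $y\ge x$. *)

(* Defs.v *)
From mathcomp Require Import all_boot.
Set Implicit Arguments. Unset Strict Implicit. Unset Printing Implicit Defensive.

Inductive form (n : nat) : Type :=
| Var : 'I_n -> form n
| Bot : form n
| Top : form n
| And : form n -> form n -> form n
| Or  : form n -> form n -> form n
| Imp : form n -> form n -> form n.
Arguments Bot {n}. Arguments Top {n}.

Fixpoint is_and_imp n (f : form n) : Prop :=
  match f with
  | Var _ => True
  | And a b => is_and_imp a /\ is_and_imp b
  | Imp a b => is_and_imp a /\ is_and_imp b
  | _ => False
  end.

Section Kripke.
Variables (n : nat) (T : Type) (le : T -> T -> Prop) (c : T -> 'I_n -> bool).

Fixpoint sat (x : T) (f : form n) : Prop :=
  match f with
  | Var i => c x i = true
  | Bot => False
  | Top => True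
  | And a b => sat x a /\ sat x b
  | Or a b => sat x a \/ sat x b
  | Imp a b => forall y, le x y -> sat y a -> sat y b
  end.

Definition is_poset : Prop :=
  (forall x, le x x) /\ (forall x y z, le x y -> le y z -> le x z) /\
  (forall x y, le x y -> le y x -> x = y).

Definition col_monotone : Prop :=
  forall x y, le x y -> forall i, c x i = true -> c y i = true.

Definition lt (x y : T) : Prop := le x y /\ x <> y.

Definition border (q : 'I_n) (x : T) : Prop :=
  c x q = false /\ forall y, lt x y -> c y q = true.

Definition separated (x : T) : Prop := exists q, border q x.

Definition has_borders : Prop :=
  forall (p : 'I_n) x, c x p = false -> exists y, le x y /\ border p y.

Definition is_upset (V : T -> Prop) : Prop := forall x y, le x y -> V x -> V y.
Definition himp (V W : T -> Prop) : T -> Prop :=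
  fun x => forall y, le x y -> V y -> W y.

Definition Ms : Type := {x : T | separated x}.
Definition le_s (a b : Ms) : Prop := le (proj1_sig a) (proj1_sig b).
Definition c_s (a : Ms) : 'I_n -> bool := c (proj1_sig a).

Definition r (V : Ms -> Prop) : T -> Prop :=
  fun x => forall z : Ms, le x (proj1_sig z) -> V z.
End Kripke.

(* Main.v *)
Require Import Defs.
From mathcomp Require Import all_boot.

Lemma sat_mono (n : nat) (T : Type) (le : T -> T -> Prop) (c : T -> 'I_n -> bool)
  (Htr : forall x y z, le x y -> le y z -> le x z) (Hc : col_monotone le c) :
  forall f x y, le x y -> sat le c x f -> sat le c y f.
Proof.
  intros f; induction f as [i| | |a IHa b IHb|a IHa b IHb|a IHa b IHb];
    simpl; intros x y Hxy H.
  - exact (Hc x y Hxy i H).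
  - exact H.
  - exact I.
  - destruct H; split; eauto.
  - destruct H; [left|right]; eauto.
  - intros z Hyz Ha. apply (H z (Htr _ _ _ Hxy Hyz) Ha).
Qed.

Theorem lemma3p10 (n : nat) (T : Type) (le : T -> T -> Prop)
    (c : T -> 'I_n -> bool)
    (Hn : 0 < n) (Hpo : is_poset le) (Hc : col_monotone le c)
    (Hb : has_borders le c) :
  (forall V W : Ms le c -> Prop,
     is_upset (@le_s n T le c) V -> is_upset (@le_s n T le c) W ->
     forall x, r (fun z => V z /\ W z) x <-> (r V x /\ r W x)) /\
  (forall V W : Ms le c -> Prop,
     is_upset (@le_s n T le c) V -> is_upset (@le_s n T le c) W ->
     forall x, r (himp (@le_s n T le c) V W) x <-> himp le (r V) (r W) x) /\
  (forall f : form n, is_and_imp f ->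
     forall x, sat le c x f <->
       (forall z : Ms le c, le x (proj1_sig z) -> sat (@le_s n T le c) (@c_s n T le c) z f)).
Proof.
  destruct Hpo as [Hrefl [Htr Hanti]].
  assert (P2 : forall V W : Ms le c -> Prop,
     is_upset (@le_s n T le c) V ->
     forall x, r (himp (@le_s n T le c) V W) x <-> himp le (r V) (r W) x).
  { intros V W HV x; unfold r, himp; split.
    - intros H y Hxy HVy z Hyz.
      apply (H z (Htr _ _ _ Hxy Hyz) z (Hrefl _) (HVy z Hyz)).
    - intros H z Hxz z' Hzz' HVz'.
      apply (H (proj1_sig z') (Htr _ _ _ Hxz Hzz')).
      + intros z'' H''. apply (HV z' z'' H'' HVz').
      + apply Hrefl. }
  split; [|split].
  - intros V W _ _ x; unfold r; split.
    + intros H; split; intros z Hz; apply (H z Hz).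
    + intros [H1 H2] z Hz; split; auto.
  - intros V W HV _ x; apply P2; exact HV.
  - assert (Hms : forall f (a b : Ms le c), le_s a b -> sat (@le_s n T le c) (@c_s n T le c) a f -> sat (@le_s n T le c) (@c_s n T le c) b f).
    { intros f a b Hab H. refine (@sat_mono n (Ms le c) (@le_s n T le c) (@c_s n T le c) _ _ f a b Hab H).
      - intros x y z; unfold le_s; apply Htr.
      - intros x y Hxy i; unfold c_s; apply Hc; exact Hxy. }
    intros f; induction f as [i| | |a IHa b IHb|a IHa b IHb|a IHa b IHb];
      simpl; intros Hf x; try contradiction.
    + split.
      * intros H z Hz. unfold c_s. exact (Hc _ _ Hz i H).
      * intros H. destruct (c x i) eqn:E; [reflexivity|].
        destruct (Hb i x E) as [y [Hxy Hy]].
        pose (z := exist (fun t => separated le c t) y (ex_intro _ i Hy) : Ms le c).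
        specialize (H z Hxy). unfold c_s in H; simpl in H.
        pose proof (proj1 Hy) as Hy0. rewrite Hy0 in H. discriminate.
    + destruct Hf as [Ha Hb'].
      pose proof (IHa Ha x) as [A1 A2]. pose proof (IHb Hb' x) as [B1 B2]. split.
      * intros [H1 H2] z Hz; split; auto.
      * intros H; split; [apply A2|apply B2]; intros z Hz; apply (H z Hz).
    + destruct Hf as [Ha Hb'].
      pose proof (P2 (fun z => sat (@le_s n T le c) (@c_s n T le c) z a)
                     (fun z => sat (@le_s n T le c) (@c_s n T le c) z b)
                     (fun u v => Hms a u v) x) as E.
      unfold r, himp in E. destruct E as [E1 E2]. split.
      * intros H. apply E2. intros y Hxy Hy. apply (IHb Hb' y). apply H; auto. apply (IHa Ha y). exact Hy.
      * intros H y Hxy Hy. apply (IHb Hb' y). apply (E1 H); auto. apply (IHa Ha y). exact Hy.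
Qed.
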